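(* Let $f:\{0,1\}^n\to\{0,1\}$ with $f(0^n)=0$, and suppose $f$ has $k$ minimal 1-certificates $c_1,\dots,c_k$ such that for each $i$, the total number of contradictions between $c_i$ and all the other $c_j$ ($j\ne i$) together is at most 2, and such that for each position $p\in[n]$ exactly one of $c_1,\dots,c_k$ assigns the value 1 to $p$. Then $s_0(f)\ge k$.
   Context: A 1-certificate is a partial assignment $c:S\to\{0,1\}$, $S\subseteq[n]$, such that $f(y)=1$ for every $y\in\{0,1\}^n$ agreeing with $c$ on $S$; it is minimal if no restriction of $c$ to a proper subset of $S$ is a 1-certificate. The number of contradictions between two partial assignments is the number of positions where one assigns 1 and the other assigns 0. $s_0(f)=\max\{|\{i: f(x^{\{i\}})\ne f(x)\}| : f(x)=0\}$, where $x^{\{i\}}$ is $x$ with bit $i$ flipped. *)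

(* Defs.v *)
From mathcomp Require Import all_boot all_order.
Set Implicit Arguments. Unset Strict Implicit. Unset Printing Implicit Defensive.

(* Inputs x in {0,1}^n, indexed by positions 'I_n (0-based stand-in for [n]). *)
Definition input (n : nat) := {ffun 'I_n -> bool}.

(* Partial assignment c : S -> {0,1}; c i = None means i \notin S. *)
Definition passign (n : nat) := {ffun 'I_n -> option bool}.

Definition dom n (c : passign n) : {set 'I_n} := [set i | c i != None].

Definition agrees n (c : passign n) (y : input n) : bool :=
  [forall i, if c i is Some b then y i == b else true].

Definition one_cert n (f : input n -> bool) (c : passign n) : Prop :=
  forall y : input n, agrees c y -> f y = true.

Definition restrict n (c : passign n) (S : {set 'I_n}) : passign n :=
  [ffun i => if i \in S then c i else None].

Definition min_one_cert n (f : input n -> bool) (c : passign n) : Prop :=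
  one_cert f c /\
  forall S : {set 'I_n}, S \proper dom c -> ~ one_cert f (restrict c S).

Definition contradictions n (c d : passign n) : nat :=
  #|[set i | ((c i == Some true) && (d i == Some false))
           || ((c i == Some false) && (d i == Some true))]|.

Definition zero_input n : input n := [ffun _ => false].

Definition flip n (x : input n) (i : 'I_n) : input n :=
  [ffun j => if j == i then ~~ x j else x j].

(* s_0(f) = max over x with f x = 0 of #{i : f(x^{i}) <> f(x)} (0 if no such x) *)
Definition s0 n (f : input n -> bool) : nat :=
  \max_(x : input n | f x == false) #|[set i | f (flip x i) != f x]|.

(* Main.v *)
Require Import Defs.
From mathcomp Require Import all_boot all_order.
Set Implicit Arguments. Unset Strict Implicit. Unset Printing Implicit Defensive.

Definition touch (E V : finType) (a b : E -> V) (e : E) (v : V) :=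
  (a e == v) || (b e == v).

Lemma no3 (E V : finType) (A : {set E}) (a b : E -> V) v d1 d2 d3 :
  #|[set e in A | touch a b e v]| <= 2 -> d1 \in A -> d2 \in A -> d3 \in A ->
  touch a b d1 v -> touch a b d2 v -> touch a b d3 v ->
  d1 != d2 -> d2 != d3 -> d3 != d1 -> False.
Proof.
move=> H h1 h2 h3 t1 t2 t3 n12 n23 n31.
have: 2 < #|[set e in A | touch a b e v]|.
  by apply/card_gt2P; exists d1, d2, d3; rewrite !inE h1 h2 h3 t1 t2 t3.
by rewrite ltnNge H.
Qed.

Lemma ext (E V : finType) (A : {set E}) (a b : E -> V) e (g1 : E -> V) X :
  e \in A -> {in A :\ e, forall d, touch a b d (g1 d)} -> {in A :\ e &, injective g1} ->
  touch a b e X -> (forall d, d \in A :\ e -> g1 d != X) ->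
  exists g : E -> V, {in A, forall e, touch a b e (g e)} /\ {in A &, injective g}.
Proof.
move=> eA hg1 ig1 tX gX.
exists (fun d => if d == e then X else g1 d); split.
  move=> d dA; case: eqP => [->//|/eqP de].
  by apply: hg1; rewrite in_setD1 de.
move=> d1 d2 d1A d2A /=.
case: eqP => [->|/eqP d1e]; case: eqP => [->|/eqP d2e] //.
+ by move=> h; move: (gX d2); rewrite in_setD1 d2e d2A h eqxx => /(_ isT).
+ by move=> h; move: (gX d1); rewrite in_setD1 d1e d1A h eqxx => /(_ isT).
+ by apply: ig1; rewrite in_setD1 ?d1e ?d2e.
Qed.

Lemma assign_gen (E V : finType) (m : nat) : forall (A : {set E}) (a b : E -> V),
  #|A| <= m -> {in A, forall e, a e != b e} ->
  (forall v, #|[set e in A | touch a b e v]| <= 2) ->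
  exists g : E -> V, {in A, forall e, touch a b e (g e)} /\ {in A &, injective g}.
Proof.
elim: m => [|m IH] A a b hA hne hdeg.
  exists a; split=> [e|e1 e2]; move: hA; rewrite leqn0 => /eqP/cards0_eq ->;
  by rewrite inE.
case: (set_0Vmem A) => [->|[e eA]].
  by exists a; split=> [e|e1 e2]; rewrite inE.
set u := a e; set w := b e.
set A1 := A :\ e.
have hA1 : #|A1| <= m by move: hA; rewrite (cardsD1 e A) eA add1n ltnS.
have sA1 : A1 \subset A by apply: subsetDl.
have hdeg1 : forall (v : V), #|[set d in A1 | touch a b d v]| <= 2.
  move=> v; apply: leq_trans (hdeg v); apply: subset_leq_card.
  by apply/subsetP=> d; rewrite !inE => /andP[/andP[_ ->] ->].
have hne1 : {in A1, forall d, a d != b d}.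
  by move=> d; rewrite in_setD1 => /andP[_]; apply: hne.
have A1P : forall d, d \in A1 -> d != e /\ d \in A.
  by move=> d; rewrite in_setD1 => /andP[-> ->].
case: (pickP [pred d | (d \in A1) && touch a b d u]) => [e' /andP[e'A1 te'] | none].
- set c := if a e' == u then b e' else a e'.
  have [e'e e'A] := A1P _ e'A1.
  have tv : forall v, touch a b e' v = (v == u) || (v == c).
    move=> v; move: te'; rewrite /touch /c.
    case: eqP => [->|hau] /=.
      by rewrite eq_sym; case: eqP => //= _; rewrite eq_sym.
    move=> /eqP ->; rewrite orbC; congr (_ || _); apply/idP/idP => /eqP ->//.
  have eu : touch a b e u by rewrite /touch eqxx.
  have ew : touch a b e w by rewrite /touch eqxx orbT.
  have cu : c != u.
    rewrite /c; have := hne e' e'A.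
    by case: (eqVneq (a e') u) => [<-|]; rewrite // eq_sym.
  have wu : w != u by rewrite eq_sym; apply: hne.
  have notu : forall d, d \in A1 -> d != e' -> ~~ touch a b d u.
    move=> d dA1 de'; apply/negP => tdu; have [de dA] := A1P _ dA1.
    apply: (no3 (hdeg u) eA e'A dA eu te' tdu).
    1-3: first [done | by rewrite eq_sym].
  have gnu : forall (g1 : E -> V) d, touch a b d (g1 d) -> d \in A1 -> d != e' -> g1 d != u.
    move=> g1 d td dA1 de'; apply/eqP => h; move: (notu d dA1 de'); by rewrite -h td.
  case: (eqVneq c w) => [cw | cw].
  + have [g1 [hg1 ig1]] := IH A1 a b hA1 hne1 hdeg1.
    have notw : forall d, d \in A1 -> d != e' -> ~~ touch a b d w.
      move=> d dA1 de'; apply/negP => tdw; have [de dA] := A1P _ dA1.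
      apply: (no3 (hdeg w) eA e'A dA ew _ tdw).
      1-4: first [done | by rewrite eq_sym | by rewrite tv cw eqxx orbT].
    have gnw : forall d, d \in A1 -> d != e' -> g1 d != w.
      move=> d dA1 de'; apply/eqP => h; move: (notw d dA1 de'); by rewrite -h hg1.
    have : touch a b e' (g1 e') by apply: hg1.
    rewrite tv cw => /orP[/eqP gu | /eqP gw].
    * apply: (ext (X := w) eA hg1 ig1 ew) => d dA1.
      case: (eqVneq d e') => [->|de']; first by rewrite gu eq_sym.
      exact: gnw.
    * apply: (ext (X := u) eA hg1 ig1 eu) => d dA1.
      case: (eqVneq d e') => [->|de']; first by rewrite gw.
      by apply: gnu => //; apply: hg1.
  + set a' := fun d => if d == e' then w else a d.
    set b' := fun d => if d == e' then c else b d.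
    have t' : forall d v, touch a' b' d v = if d == e' then (w == v) || (c == v) else touch a b d v.
      by move=> d v; rewrite /touch /a' /b'; case: (d == e').
    have hne' : {in A1, forall d, a' d != b' d}.
      move=> d dA1; rewrite /a' /b'; case: (d == e'); first by rewrite eq_sym.
      exact: hne1.
    have hdeg' : forall v, #|[set d in A1 | touch a' b' d v]| <= 2.
      move=> v; apply: leq_trans (hdeg v).
      set S' := [set d in A1 | touch a' b' d v].
      set phi := fun d => if (d == e') && (v == w) then e else d.
      have iphi : {in S' &, injective phi}.
        move=> d1 d2 /setIdP[d1A1 _] /setIdP[d2A1 _]; rewrite /phi.
        have [d1e _] := A1P _ d1A1; have [d2e _] := A1P _ d2A1.
        case: (eqVneq d1 e') => [->|d1e']; case: (eqVneq d2 e') => [->|d2e']; case: (v == w) => //=.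
        all: try (by move=> h; move: d2e; rewrite -h eqxx).
        all: try (by move=> h; move: d1e; rewrite h eqxx).
        all: try (by move=> _; apply/eqP; rewrite -(eqP d1e')).
      rewrite -(card_in_imset iphi); apply: subset_leq_card.
      apply/subsetP => x /imsetP[d /setIdP[dA1 td] ->].
      have [de dA] := A1P _ dA1.
      move: td; rewrite t' /phi; case: eqP => [-> | _] /=.
        case: eqP => [<- _ | /eqP vw]; first by rewrite eqxx inE eA ew.
        move: vw; rewrite eq_sym => /negbTE -> /= => /eqP <-; by rewrite inE e'A tv eqxx orbT.
      by move=> td; rewrite inE dA td.
    have [g1 [hg1 ig1]] := IH A1 a' b' hA1 hne' hdeg'.
    have hg1o : forall d, d \in A1 -> d != e' -> touch a b d (g1 d).
      by move=> d dA1 de'; move: (hg1 d dA1); rewrite t' (negbTE de').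
    have : touch a' b' e' (g1 e') by apply: hg1.
    rewrite t' eqxx => /orP[/eqP gw | /eqP gc].
    * set g2 := fun d => if d == e' then u else g1 d.
      apply: (ext (g1 := g2) (X := w) eA) => //.
      - move=> d dA1; rewrite /g2; case: eqP => [->|/eqP de']; first by rewrite tv eqxx.
        exact: hg1o.
      - move=> d1 d2 d1A1 d2A1; rewrite /g2.
        case: eqP => [->|/eqP d1e]; case: eqP => [->|/eqP d2e] //.
        + move=> h; move: (gnu g1 d2 (hg1o _ d2A1 d2e) d2A1 d2e); by rewrite h eqxx.
        + move=> h; move: (gnu g1 d1 (hg1o _ d1A1 d1e) d1A1 d1e); by rewrite h eqxx.
        + exact: ig1.
      - move=> d dA1; rewrite /g2; case: (eqVneq d e') => [_|de']; first by rewrite eq_sym.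
        rewrite gw; apply/eqP => h; move: (ig1 _ _ dA1 e'A1 h) => /eqP; by rewrite (negbTE de').
    * apply: (ext (g1 := g1) (X := u) eA) => //.
      - move=> d dA1; case: (eqVneq d e') => [->|de']; first by rewrite -gc tv eqxx orbT.
        exact: hg1o.
      - move=> d dA1; case: (eqVneq d e') => [->|de']; first by rewrite -gc.
        exact: (gnu g1 d (hg1o _ dA1 de') dA1 de').
- have [g1 [hg1 ig1]] := IH A1 a b hA1 hne1 hdeg1.
  exists (fun d => if d == e then u else g1 d); split.
    move=> d dA; case: eqP => [->|/eqP de]; first by rewrite /touch eqxx.
    by apply: hg1; rewrite in_setD1 de.
  move=> d1 d2 d1A d2A /=.
  have gu : forall d, d \in A1 -> g1 d != u.
    move=> d dA1; apply/eqP => gdu; move: (none d) => /=; rewrite dA1 /=.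
    by rewrite -gdu hg1.
  case: eqP => [->|/eqP d1e]; case: eqP => [->|/eqP d2e] //.
  + by move=> h; move: (gu d2); rewrite in_setD1 d2e d2A h eqxx => /(_ isT).
  + by move=> h; move: (gu d1); rewrite in_setD1 d1e d1A h eqxx => /(_ isT).
  + by apply: ig1; rewrite in_setD1 ?d1e ?d2e.
Qed.
Lemma card_pairs (I J : finType) (P : I -> J -> bool) :
  #|[set x : I * J | P x.1 x.2]| = \sum_j #|[set i | P i j]|.
Proof.
rewrite -sum1_card big_mkcond /=.
under eq_bigr => x _ do rewrite inE.
rewrite -(pair_big xpredT xpredT (fun i j => if P i j then 1 else 0)) /= exchange_big.
apply: eq_bigr => j _; rewrite -sum1_card.
rewrite [RHS]big_mkcond; apply: eq_bigr => i _; by rewrite inE.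
Qed.

Definition contra n (c d : passign n) (p : 'I_n) :=
  ((c p == Some true) && (d p == Some false))
  || ((c p == Some false) && (d p == Some true)).

Lemma flipE n (x : input n) p j : flip x p j = if j == p then ~~ x j else x j.
Proof. by rewrite /flip ffunE. Qed.

Lemma ones_flip n (x : input n) p : x p = false ->
  #|[set j | flip x p j]| = #|[set j | x j]|.+1.
Proof.
move=> xp.
have -> : [set j | flip x p j] = p |: [set j | x j].
  apply/setP => j; rewrite !inE flipE; case: eqP => [->|_]; by rewrite ?xp.
by rewrite cardsU1 inE xp.
Qed.

Theorem lemma3 (n k : nat) (f : input n -> bool) (c : 'I_k -> passign n) :
  f (zero_input n) = false ->
  injective c ->
  (forall i, min_one_cert f (c i)) ->
  (forall i, \sum_(j < k | j != i) contradictions (c i) (c j) <= 2) ->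
  (forall p : 'I_n, #|[set i | c i p == Some true]| = 1) ->
  k <= s0 f.
Proof.
move=> f0 _ hcert hcon hown.
case: k c hcert hcon hown => [//|k] c hcert hcon hown.
pose i0 : 'I_k.+1 := ord0.
pose T q := [set j | c j q == Some false].
pose own q := odflt i0 [pick j | c j q == Some true].
pose tl q := odflt i0 [pick j in T q].
pose Aset := [set q | #|T q| == 1].
pose C i := [set pj : 'I_n * 'I_k.+1 | contra (c i) (c pj.2) pj.1].
have ownP : forall q, c (own q) q = Some true.
  move=> q; rewrite /own; case: pickP => [j /eqP //|none].
  have : #|[set j | c j q == Some true]| = 0 by apply: eq_card0 => j; rewrite inE none.
  by rewrite hown.
have ownU : forall q j, c j q = Some true -> j = own q.
  move=> q j hj; have /card_le1_eqP := eq_leq (hown q).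
  by apply; rewrite inE ?hj ?ownP.
have tlP : forall q, q \in Aset -> c (tl q) q = Some false.
  move=> q; rewrite inE /tl; case: pickP => [j|none].
    by rewrite inE => /eqP.
  by rewrite (_ : #|T q| = 0) //; apply: eq_card0 => j; rewrite none.
have tlU : forall q j, q \in Aset -> c j q = Some false -> j = tl q.
  move=> q j qA hj; have /card_le1_eqP : #|T q| <= 1 by move: qA; rewrite inE => /eqP ->.
  by apply; rewrite inE ?hj ?tlP.
have Ccard : forall i, #|C i| <= 2.
  move=> i; apply: leq_trans (hcon i).
  rewrite /C (card_pairs (fun p j => contra (c i) (c j) p)) (bigD1 i) //=.
  have -> : #|[set p | contra (c i) (c i) p]| = 0.
    apply: eq_card0 => p; rewrite inE /contra.
    by case: (c i p) => [[]|].
  by [].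
have Tne : forall q, q \in Aset -> own q != tl q.
  move=> q qA; apply/eqP => h; move: (ownP q); by rewrite h tlP.
have Cin : forall i q j, (q, j) \in C i = contra (c i) (c j) q by move=> *; rewrite inE.
have hdeg : forall v, #|[set e in Aset | touch own tl e v]| <= 2.
  move=> v; apply: leq_trans (Ccard v).
  pose phi q := (q, if own q == v then tl q else own q).
  have iphi : injective phi by move=> q1 q2 [].
  rewrite -(card_imset _ iphi); apply: subset_leq_card.
  apply/subsetP => x /imsetP[q /setIdP[qA tq] ->]; rewrite Cin /contra.
  move: tq; rewrite /touch; case: eqP => [<- _|_ /= /eqP <-].
    by rewrite ownP tlP ?eqxx.
  by rewrite ownP tlP ?eqxx ?orbT.
have [g [hg ig]] := assign_gen (m := #|Aset|) (a := own) (b := tl) (leqnn _) Tne hdeg.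
pose W := [set q | (1 < #|T q|) || ((q \in Aset) && (g q == own q))].
pose L i := [set q | ((q \in W) && (c i q == Some true)) || ((q \notin W) && (c i q == Some false))].
have T0 : forall q, q \in W -> 0 < #|T q|.
  move=> q; rewrite inE => /orP[/ltnW //| /andP[qA _]]; move: qA; rewrite inE => /eqP ->.
  by [].
have R1 : forall i q, q \in L i -> exists j, (q, j) \in C i.
  move=> i q; rewrite inE => /orP[/andP[qW /eqP ci]| /andP[qW /eqP ci]].
    have /card_gt0P [j] := T0 q qW; rewrite inE => cj.
    by exists j; rewrite Cin /contra ci eqxx cj.
  by exists (own q); rewrite Cin /contra ci ownP !eqxx orbT.
have R2 : forall i q, q \in L i -> ((q \in Aset) && (g q == i)) \/
    exists j1 j2, [/\ j1 != j2, (q, j1) \in C i & (q, j2) \in C i].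
  move=> i q; rewrite inE => /orP[/andP[qW /eqP ci]| /andP[qW /eqP ci]].
    have oi := ownU _ _ ci.
    move: (qW); rewrite inE => /orP[/card_gt1P [j1 [j2 [h1 h2 h12]]] | /andP[qA /eqP gq]].
      right; exists j1, j2; split => //; rewrite Cin /contra ci eqxx.
        by move: h1; rewrite inE => ->.
      by move: h2; rewrite inE => ->.
    by left; apply/andP; split; [exact: qA | rewrite gq -oi].
  have iT : i \in T q by rewrite inE ci.
  have qA : q \in Aset.
    rewrite inE eqn_leq; move: qW; rewrite inE negb_or => /andP[h _].
    by rewrite leqNgt h; apply/card_gt0P; exists i.
  have qA1 : #|T q| == 1 by move: qA; rewrite inE.
  move: qW; rewrite inE negb_or negb_and => /andP[_ /orP[hq|gno]].
    by case/negP: hq.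
  have := hg q qA; rewrite /touch eq_sym (negbTE gno) /= => /eqP gt.
  by left; apply/andP; split; [exact: qA | rewrite -gt (tlU _ _ qA ci)].
have Lle1 : forall i q q', q \in L i -> q' \in L i -> q = q'.
  have key : forall i q q', q \in L i -> q' \in L i ->
      (exists j1 j2, [/\ j1 != j2, (q, j1) \in C i & (q, j2) \in C i]) -> q = q'.
    move=> i q q' _ qL' [j1 [j2 [j12 h1 h2]]].
    case: (eqVneq q q') => // qq'.
    have [j3 h3] := R1 _ _ qL'.
    have : 2 < #|C i|.
      apply/card_gt2P; exists (q, j1), (q, j2), (q', j3); split; first by [].
      split; apply/negP => /eqP [] => /eqP; rewrite ?(negbTE j12) ?(negbTE qq') //.
      by rewrite eq_sym (negbTE qq').
    by rewrite ltnNge Ccard.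
  move=> i q q' qL qL'.
  case: (R2 _ _ qL) => [/andP[qA /eqP gq]|]; last exact: key.
  case: (R2 _ _ qL') => [/andP[qA' /eqP gq']|]; last by move=> h; symmetry; apply: key h.
  by apply: ig => //; rewrite gq gq'.
pose P (y : input n) := (f y == false) && [forall q in W, y q == false].
have P0 : P (zero_input n).
  by rewrite /P f0 eqxx /=; apply/forall_inP => q _; rewrite /zero_input ffunE.
case: (@arg_maxnP _ (zero_input n) P (fun y => #|[set p | y p]|) P0) => x Px xmax.
have fx : f x = false by move: Px => /andP[/eqP].
have xW : forall q, q \in W -> x q = false.
  by move=> q qW; move: Px => /andP[_ /forall_inP /(_ q qW) /eqP].
have sens : forall p, x p = false -> p \notin W -> f (flip x p) = true.
  move=> p xp pW; case hf: (f (flip x p)) => //; exfalso.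
  have : P (flip x p).
    rewrite /P hf eqxx /=; apply/forall_inP => q qW; rewrite flipE.
    case: (eqVneq q p) => [eqp|_]; last by rewrite xW.
    by move: pW; rewrite -eqp qW.
  by move=> /xmax /=; rewrite ones_flip // ltnn.
have Q : forall i, exists p, (f (flip x p) != f x) &&
    (((c i p == Some true) && ~~ x p) || ((c i p == Some false) && x p && (p \notin W))).
  move=> i.
  have nag : ~~ agrees (c i) x.
    by apply/negP => ag; case: (hcert i) => hc _; move: (hc x ag); rewrite fx.
  case: (boolP [exists p, (c i p == Some true) && ~~ x p && (p \notin W)]).
    move/existsP => [p /andP[/andP[/eqP cp xp] pW]].
    by exists p; rewrite sens ?fx ?(negbTE xp) // cp eqxx.
  move=> none; move: nag; rewrite /agrees => /forallPn [p0 hp0].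
  have dis : forall q, ~~ (if c i q is Some b then x q == b else true) -> q \in L i.
    move=> q; case ciq: (c i q) => [b|] //=; case: b ciq => ciq hq.
      have xq : x q = false by move: hq; case: (x q).
      case qW: (q \in W); first by rewrite inE qW ciq.
      move: none; rewrite negb_exists => /forallP /(_ q).
      by rewrite ciq eqxx xq qW.
    have xq : x q = true by move: hq; case: (x q).
    have qW : q \in W = false by apply/negP => /xW; rewrite xq.
    by rewrite inE qW ciq.
  have ag : agrees (c i) (flip x p0).
    apply/forallP => q; rewrite flipE; case: (eqVneq q p0) => [->|qp].
      by move: hp0; case: (c i p0) => [b|] //=; case: b; case: (x p0).
    apply/negPn/negP => hq; move: qp; by rewrite (Lle1 _ _ _ (dis _ hq) (dis _ hp0)) eqxx.
  exists p0; case: (hcert i) => hc _; rewrite (hc _ ag) fx /=.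
  move: hp0; case: (c i p0) => [[]|] //= hx.
    by move: hx; case: (x p0).
  have xp : x p0 = true by move: hx; case: (x p0).
  have qW : p0 \in W = false by apply/negP => /xW; rewrite xp.
  by rewrite xp qW.
pose s i := xchoose (Q i).
have sP : forall i, _ := fun i => xchooseP (Q i).
have si : injective s.
  move=> i j hij; have := sP i; have := sP j; rewrite -/(s i) -/(s j) -hij; set p := s i.
  move=> /andP[_ /orP[/andP[/eqP cj xp] | /andP[/andP[/eqP cj xp] pW]]];
  move=> /andP[_ /orP[/andP[/eqP ci xp'] | /andP[/andP[/eqP ci xp'] pW']]].
  - by rewrite (ownU _ _ ci) (ownU _ _ cj).
  - by move: xp; rewrite xp'.
  - by move: xp'; rewrite xp.
  - have : #|T p| <= 1.
      by move: pW; rewrite inE negb_or => /andP[]; rewrite ltnNge negbK.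
    by move/card_le1_eqP; apply; rewrite inE ?ci ?cj.
have -> : k.+1 = #|[set s i | i in 'I_k.+1]| by rewrite card_imset // card_ord.
rewrite /s0; apply: (leq_trans _ (@leq_bigmax_cond _ (fun y : input n => f y == false) (fun y => #|[set i | f (flip y i) != f y]|) x _)); last by rewrite fx.
apply: subset_leq_card; apply/subsetP => p /imsetP[i _ ->].
by rewrite inE; move: (sP i) => /andP[].
Qed.
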